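(* Let $\hat{\mathbb{N}}$ be the set of odd integers $n\ge 3$, let $n \in \hat{\mathbb{N}}$ and $M \subseteq \hat{\mathbb{N}} \setminus \{n\}$. Then $\mathrm{pPol}\, R^{0,2}_n \not\supseteq \bigcap_{m \in M} \mathrm{pPol}\, R^{0,2}_m$.
   Context: Partial functions are on $\{0,1\}$: an $n$-ary partial function is a map $f:\operatorname{dom} f\to\{0,1\}$ with $\operatorname{dom} f\subseteq\{0,1\}^n$; $P_{\mathbf{2}}$ is the set of all of them, and an empty intersection of subsets of $P_{\mathbf{2}}$ is understood as $P_{\mathbf{2}}$. For $\rho\subseteq\{0,1\}^h$, $\mathrm{pPol}\,\rho$ is the set of partial functions $f$ such that for every $h\times n$ matrix whose rows lie in $\operatorname{dom} f$ and whose columns lie in $\rho$, the column obtained by applying $f$ row-wise lies in $\rho$. Let $\rho_{0,2}=\{(0,0),(0,1),(1,0)\}$. For $n\ge2$, $R^{0,2}_{C,n}=\{(x_1,\dots,x_n)\in\{0,1\}^n: (x_i,x_{i+1})\in\rho_{0,2}\text{ for } i\in[n], \text{ with } x_{n+1}:=x_1\}$, $R^{0,2}_{K,n}=\{(x_1,\dots,x_n): (x_i,x_j)\in\rho_{0,2}\text{ for all } i\ne j\}$, and $R^{0,2}_n=R^{0,2}_{C,n}\times R^{0,2}_{K,n}\subseteq\{0,1\}^{2n}$ (tuples $(x_1,\dots,x_{2n})$ with $(x_1,\dots,x_n)\in R^{0,2}_{C,n}$ and $(x_{n+1},\dots,x_{2n})\in R^{0,2}_{K,n}$). *)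

(* Defs.v *)
From mathcomp Require Import all_boot.
Set Implicit Arguments. Unset Strict Implicit. Unset Printing Implicit Defensive.

(* Boolean tuples of length n, i.e. elements of {0,1}^n (false = 0, true = 1). *)
Definition btuple (n : nat) := {ffun 'I_n -> bool}.

Record pfun := PFun { arity : nat; pfval : {ffun btuple arity -> option bool} }.

Definition in_dom (f : pfun) (x : btuple (arity f)) : bool := pfval f x != None.
Arguments in_dom : clear implicits.

Definition pPol (h : nat) (rho : pred (btuple h)) (f : pfun) : Prop :=
  forall M : 'I_h -> 'I_(arity f) -> bool,
    (forall i : 'I_h, in_dom f [ffun j => M i j]) ->
    (forall j : 'I_(arity f), rho [ffun i => M i j]) ->
    rho [ffun i => odflt false (pfval f [ffun j => M i j])].

Definition rho02 (x y : bool) : bool := ~~ (x && y).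

(* R^{0,2}_{C,n}: consecutive (cyclically, 0-based indices, successor i+1 mod n) *)
Definition RC02 (n : nat) : pred (btuple n) := fun x =>
  [forall i : 'I_n, forall j : 'I_n,
     (val j == i.+1 %% n) ==> rho02 (x i) (x j)].

Definition RK02 (n : nat) : pred (btuple n) := fun x =>
  [forall i : 'I_n, forall j : 'I_n, (i != j) ==> rho02 (x i) (x j)].

Definition R02 (n : nat) : pred (btuple (n + n)) := fun x =>
  RC02 [ffun i : 'I_n => x (lshift n i)] && RK02 [ffun i : 'I_n => x (rshift n i)].

Definition Nhat (n : nat) : Prop := odd n /\ 3 <= n.

(* Main.v *)
Require Import Defs.
From mathcomp Require Import all_boot zify.
Set Implicit Arguments. Unset Strict Implicit. Unset Printing Implicit Defensive.

Lemma modn_cases (n x : nat) : x < 2 * n ->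
  (x < n /\ x %% n = x) \/ (n <= x /\ x %% n = x - n).
Proof.
move=> H; case: (ltnP x n) => Hx; [left; split => //; exact: modn_small|right; split => //].
have -> : x = (x - n) + n by lia.
rewrite modnDr modn_small; lia.
Qed.

Definition cw (n j i : nat) : bool :=
  let d := (j + n - i) %% n in (d %% 2 == 0) && (d <= n - 3).
Definition col (n j : nat) : nat := if j == n.-1 then 2 else j %% 2.
Definition cvec (n j : nat) : btuple (4 * n) :=
  [ffun t : 'I_(4 * n) => if t %/ n == 0 then cw n j (t %% n) else (t %/ n == (col n j).+1)].
Definition qvec (n i : nat) : btuple (4 * n) :=
  [ffun t : 'I_(4 * n) => (0 < t %/ n) && (t %% n == i)].
Definition disj k (x y : btuple k) := forall t, ~~ (x t && y t).
Definition adjn (n j k : nat) : Prop :=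
  k = j.+1 \/ j = k.+1 \/ (j = n.-1 /\ k = 0) \/ (k = n.-1 /\ j = 0).

Lemma coord (n b i : nat) : b < 4 -> i < n -> exists t : 'I_(4 * n), t %/ n = b /\ t %% n = i.
Proof.
move=> Hb Hi; have H : b * n + i < 4 * n by nia.
exists (Ordinal H) => /=; split.
- rewrite divnMDl; last lia. rewrite divn_small //; lia.
- rewrite modnMDl modn_small //.
Qed.

Lemma disjC k (x y : btuple k) : disj x y -> disj y x.
Proof. by move=> H t; rewrite andbC. Qed.

Lemma cq_ndisj n j i : i < n -> ~ disj (cvec n j) (qvec n i).
Proof.
move=> Hi H.
have Hb : (col n j).+1 < 4.
  rewrite /col; case: ifP => _ //; have := ltn_pmod j (isT : 0 < 2); lia.
have [t [H1 H2]] := @coord n (col n j).+1 i Hb Hi.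
move: (H t); rewrite !ffunE H1 H2 /= !eqxx //.
Qed.

Lemma q_self n i : i < n -> ~ disj (qvec n i) (qvec n i).
Proof.
move=> Hi H; have [t [H1 H2]] := @coord n 1 i isT Hi.
move: (H t); rewrite !ffunE H1 H2 /= !eqxx //.
Qed.

Lemma qq_disj n i k : disj (qvec n i) (qvec n k) -> i < n -> i <> k.
Proof. by move=> H Hi E; subst; exact: q_self Hi H. Qed.

Lemma cq_neq n j i : 0 < n -> j < n -> cvec n j <> qvec n i.
Proof.
move=> Hn Hj E; have [t [H1 H2]] := @coord n 0 j isT Hj.
have := congr1 (fun f : btuple (4 * n) => f t) E; rewrite !ffunE H1 H2 /= /cw.
have -> : j + n - j = n by lia.
rewrite modnn //=; lia.
Qed.

Lemma cwE n j i : j < n -> i < n -> cw n j i =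
  (((if i <= j then j - i else j + n - i) %% 2 == 0) &&
   ((if i <= j then j - i else j + n - i) <= n - 3)).
Proof.
move=> Hj Hi; rewrite /cw; case: (leqP i j) => H.
- have -> : j + n - i = (j - i) + n by lia.
  by rewrite modnDr (@modn_small (j - i) n) //; lia.
- by rewrite (@modn_small (j + n - i) n) //; lia.
Qed.

Lemma c_coord0 n j (t : 'I_(4 * n)) : t %/ n = 0 -> cvec n j t = cw n j (t %% n).
Proof. by move=> H; rewrite ffunE H. Qed.

Lemma cc_disj n j k : n %% 2 = 1 -> 3 <= n -> j < n -> k < n ->
  disj (cvec n j) (cvec n k) -> adjn n j k.
Proof.
move=> Hodd Hn Hj Hk H; rewrite /adjn.
have key : forall i, i < n -> ~~ (cw n j i && cw n k i).
  move=> i Hi; have [t [H1 H2]] := @coord n 0 i isT Hi.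
  by have := H t; rewrite !c_coord0 // H2.
case: (ltngtP j k) => Hjk.
- case E: ((k - j) %% 2 == 0).
  + have := key j Hj; rewrite !cwE // !leqnn.
    have -> : (j <= k) = true by lia.
    rewrite subnn /=. move/eqP: E => E. rewrite E /=.
    lia.
  + have := key k Hk; rewrite !cwE // !leqnn.
    have -> : (k <= j) = false by lia.
    rewrite subnn /=. move/eqP: E => E.
    lia.
- case E: ((j - k) %% 2 == 0).
  + have := key k Hk; rewrite !cwE // !leqnn.
    have -> : (k <= j) = true by lia.
    rewrite subnn /=. move/eqP: E => E. rewrite E /=.
    lia.
  + have := key j Hj; rewrite !cwE // !leqnn.
    have -> : (j <= k) = false by lia.
    rewrite subnn /=. move/eqP: E => E.
    lia.
- subst; have := key k Hk; rewrite !cwE // !leqnn subnn /=; lia.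
Qed.

Lemma succ_mod n j : j < n -> j.+1 %% n = if j.+1 == n then 0 else j.+1.
Proof.
move=> Hj; case: eqP => [->|H]; first by rewrite modnn.
by rewrite modn_small //; lia.
Qed.

Lemma cc_next_disj n j k : n %% 2 = 1 -> 3 <= n -> j < n -> k = j.+1 %% n ->
  disj (cvec n j) (cvec n k).
Proof.
move=> Hodd Hn Hj; rewrite succ_mod // => Hk t.
have Hkn : k < n by move: Hk; case: eqP => H0 ->; lia.
have Hi : t %% n < n by rewrite ltn_mod; lia.
rewrite !ffunE; case: eqP => Ht.
- rewrite !cwE //; move: Hk (t %% n) Hi => Hk i Hi; clear Ht; move: Hk; case: eqP => Hjn ->; repeat (case: ifP => ?); lia.
- rewrite /col; move: Hk (t %/ n) Ht => Hk b Hb; move: Hk; case: eqP => Hjn ->; repeat (case: ifP => ?); lia.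
Qed.

Lemma modD_congr n x y z : x = y %[mod n] -> x + z = y + z %[mod n].
Proof. by move=> E; rewrite -modnDml E modnDml. Qed.

Lemma adj_mod n j k : 0 < n -> adjn n j k -> (k = j.+1 %[mod n]) \/ (j = k.+1 %[mod n]).
Proof.
move=> Hn0; case=> [->|[->|[[-> ->]|[-> ->]]]]; [by left|by right| |].
- left; case: n Hn0 => //= n _; by rewrite modnn mod0n.
- right; case: n Hn0 => //= n _; by rewrite modnn mod0n.
Qed.

Lemma walk n m (p : nat -> nat) : n %% 2 = 1 -> m %% 2 = 1 -> m < n ->
  (forall a, a < m -> adjn n (p a) (p a.+1)) -> p m = p 0 -> False.
Proof.
move=> Hn Hm Hmn Hadj Hc.
have inv : forall a, a <= m -> exists h, h <= a /\
    (p a + m + a = p 0 + m + 2 * h %[mod n]).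
  elim=> [|a IH] Ha; first by exists 0; rewrite !addn0.
  have [h [Hh E]] := IH (ltnW Ha).
  have Hn0 : 0 < n by lia.
  case: (adj_mod Hn0 (Hadj a Ha)) => E2.
  - exists h.+1; split; first lia.
    have -> : p a.+1 + m + a.+1 = p a.+1 + (m + a.+1) by lia.
    rewrite (modD_congr _ E2).
    have -> : (p a).+1 + (m + a.+1) = p a + m + a + 2 by lia.
    rewrite (modD_congr _ E).
    congr (_ %% n); lia.
  - exists h; split; first lia.
    rewrite -E.
    have -> : p a + m + a = p a + (m + a) by lia.
    rewrite (modD_congr _ E2).
    congr (_ %% n); lia.
have [h [Hh E]] := inv m (leqnn m).
rewrite Hc in E.
have E' : m = 2 * h %[mod n].
  apply/eqP; rewrite -(eqn_modDl (p 0 + m)).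
  by apply/eqP.
move: E'; rewrite (@modn_small m n) //.
have [[H1 ->]|[H1 ->]] := @modn_cases n (2 * h) ltac:(lia); lia.
Qed.

Definition fval n (x : btuple (4 * n)) : option bool :=
  if (x == cvec n 0) || (x == cvec n 1) then Some true
  else if [exists j : 'I_n, x == cvec n j] || [exists i : 'I_n, x == qvec n i]
  then Some false else None.

Definition fn n : pfun := @PFun (4 * n) [ffun x => fval x].

Definition Fv n (x : btuple (4 * n)) : bool := odflt false (fval x).

Lemma dom_cases n (x : btuple (4 * n)) : 1 < n -> fval x != None ->
  (exists j, j < n /\ x = cvec n j) \/ (exists i, i < n /\ x = qvec n i).
Proof.
move=> Hn; rewrite /fval; case: ifP => [/orP[]/eqP ->|_].
- by left; exists 0; split => //; lia.
- by left; exists 1.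
- case: ifP => // /orP[]/existsP[j /eqP ->] _.
  + by left; exists j.
  + by right; exists j.
Qed.

Lemma Fv_true n (x : btuple (4 * n)) : Fv x -> x = cvec n 0 \/ x = cvec n 1.
Proof.
rewrite /Fv /fval; case: ifP => [/orP[]/eqP -> _|_]; [by left|by right|].
by case: ifP.
Qed.

Lemma Fv_q n i : 1 < n -> Fv (qvec n i) = false.
Proof.
move=> Hn; apply/negP => /Fv_true [] E; apply: (@cq_neq n _ i _ _ (esym E)); lia.
Qed.

Lemma cnext n (x y : btuple (4 * n)) j : n %% 2 = 1 -> 3 <= n -> fval y != None ->
  x = cvec n j -> j < n -> disj x y -> exists k, [/\ k < n, y = cvec n k & adjn n j k].
Proof.
move=> Ho Hn Hy -> Hj H.
have [[k [Hk E]]|[i [Hi E]]] := @dom_cases n y ltac:(lia) Hy; subst y.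
- by exists k; split => //; apply: cc_disj.
- by case: (cq_ndisj Hi H).
Qed.

Lemma qnext n (x y : btuple (4 * n)) i : 1 < n -> fval y != None ->
  x = qvec n i -> i < n -> disj x y -> exists k, k < n /\ y = qvec n k.
Proof.
move=> Hn Hy -> Hi H.
have [[k [Hk E]]|[k [Hk E]]] := @dom_cases n y Hn Hy; subst y.
- by case: (cq_ndisj Hi (disjC H)).
- by exists k.
Qed.

Lemma pres n m (r s : 'I_m -> btuple (4 * n)) :
  n %% 2 = 1 -> 3 <= n -> m %% 2 = 1 -> 3 <= m -> m <> n ->
  (forall a, fval (r a) != None) -> (forall a, fval (s a) != None) ->
  (forall a b : 'I_m, val b = (val a).+1 %% m -> disj (r a) (r b)) ->
  (forall a b : 'I_m, a != b -> disj (s a) (s b)) ->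
  (forall a b : 'I_m, val b = (val a).+1 %% m -> ~~ (Fv (r a) && Fv (r b))) /\
  (forall a b : 'I_m, a != b -> ~~ (Fv (s a) && Fv (s b))).
Proof.
move=> Ho Hn Hmo Hm Hmn Dr Ds Cr Ks.
have Hm0 : 0 < m by lia.
pose om k := Ordinal (ltn_pmod k Hm0).
have omv : forall a : 'I_m, om (val a) = a.
  by move=> a; apply: val_inj; rewrite /= modn_small.
have adjom : forall a, val (om a.+1) = (val (om a)).+1 %% m.
  by move=> a; rewrite /= -[(a %% m).+1]addn1 modnDml addn1.
case: (ltngtP m n) => Hc; last by [].
- have Hn5 : 5 <= n by lia.
  split.
  + case: (dom_cases (ltac:(lia) : 1 < n) (Dr (om 0))) => [[j [Hj Ej]]|[i [Hi Ei]]].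
    * have allc : forall a, exists k, k < n /\ r (om a) = cvec n k.
        elim=> [|a [k [Hk E]]]; first by exists j.
        have [k' [Hk' E' _]] := cnext Ho Hn (Dr (om a.+1)) E Hk (Cr _ _ (adjom a)).
        by exists k'.
      pose p a := odflt 0 (omap val [pick k : 'I_n | r (om a) == cvec n k]).
      have Hp : forall a, p a < n /\ r (om a) = cvec n (p a).
        move=> a; rewrite /p; case: pickP => [k /eqP E|H] /=; first by [].
        have [k [Hk E]] := allc a.
        by move: (H (Ordinal Hk)); rewrite E eqxx.
      exfalso; apply: (@walk n m p Ho Hmo Hc).
      - move=> a Ha; have [Ha1 Ea] := Hp a; have [Hb1 Eb] := Hp a.+1.
        have := Cr _ _ (adjom a); rewrite Ea Eb; exact: cc_disj.
      - rewrite /p; have -> : om m = om 0 by apply: val_inj; rewrite /= modnn mod0n.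
        by [].
    * have allq : forall a, exists k, k < n /\ r (om a) = qvec n k.
        elim=> [|a [k [Hk E]]]; first by exists i.
        have [k' [Hk' E']] := qnext (ltac:(lia) : 1 < n) (Dr (om a.+1)) E Hk (Cr _ _ (adjom a)).
        by exists k'.
      have Fr : forall a, Fv (r a) = false.
        move=> a; have [k [Hk E]] := allq (val a); rewrite omv in E.
        rewrite E Fv_q //; lia.
      by move=> a b _; rewrite Fr.
  + move=> a b Hab; apply/negP => /andP [Fa Fb].
    have [c [Hca Hcb]] : exists c : 'I_m, c != a /\ c != b.
      have H0 : forall k, k < 3 -> val (om k) = k by move=> k Hk; rewrite /= modn_small //; lia.
      case: (eqVneq (om 0) a) => Ha0.
      - case: (eqVneq (om 1) b) => Hb1.
        + exists (om 2); split; apply/eqP => /(congr1 val); rewrite -?Ha0 -?Hb1 !H0 //.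
        + exists (om 1); split => //; apply/eqP => /(congr1 val); rewrite -?Ha0 !H0 //.
      - case: (eqVneq (om 0) b) => Hb0.
        + case: (eqVneq (om 1) a) => Ha1.
          * exists (om 2); split; apply/eqP => /(congr1 val); rewrite -?Ha1 -?Hb0 !H0 //.
          * by exists (om 1); split => //; apply/eqP => /(congr1 val); rewrite -?Hb0 !H0.
        + by exists (om 0).
    have [ja [Hja Ea]] : exists ja, ja < 2 /\ s a = cvec n ja.
      by case: (Fv_true Fa) => E; [exists 0|exists 1].
    have [jb [Hjb Eb]] : exists jb, jb < 2 /\ s b = cvec n jb.
      by case: (Fv_true Fb) => E; [exists 0|exists 1].
    have Hac : a != c by rewrite eq_sym.
    have [l [Hl El Hal]] := cnext Ho Hn (Ds c) Ea (ltac:(lia) : ja < n) (Ks _ _ Hac).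
    have Hlb : adjn n l jb.
      have := Ks _ _ Hcb; rewrite El Eb; apply: cc_disj => //; lia.
    have Hab' : adjn n ja jb.
      have := Ks _ _ Hab; rewrite Ea Eb; apply: cc_disj => //; lia.
    move: Hal Hlb Hab'; rewrite /adjn; lia.
- exfalso.
  have H0 : forall k, k < 4 -> val (om k) = k by move=> k Hk; rewrite /= modn_small //; lia.
  have neq : forall k l, k < 4 -> l < 4 -> k != l -> om k != om l.
    move=> k l Hk Hl Hkl; apply/eqP => /(congr1 val); rewrite !H0 //; exact/eqP.
  case: (dom_cases (ltac:(lia) : 1 < n) (Ds (om 0))) => [[j [Hj Ej]]|[i [Hi Ei]]].
  + have [k1 [Hk1 E1 A1]] := cnext Ho Hn (Ds (om 1)) Ej Hj (Ks _ _ (neq 0 1 isT isT isT)).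
    have [k2 [Hk2 E2 A2]] := cnext Ho Hn (Ds (om 2)) Ej Hj (Ks _ _ (neq 0 2 isT isT isT)).
    have [k3 [Hk3 E3 A3]] := cnext Ho Hn (Ds (om 3)) Ej Hj (Ks _ _ (neq 0 3 isT isT isT)).
    have A12 : adjn n k1 k2 by have := Ks _ _ (neq 1 2 isT isT isT); rewrite E1 E2; exact: cc_disj.
    have A13 : adjn n k1 k3 by have := Ks _ _ (neq 1 3 isT isT isT); rewrite E1 E3; exact: cc_disj.
    have A23 : adjn n k2 k3 by have := Ks _ _ (neq 2 3 isT isT isT); rewrite E2 E3; exact: cc_disj.
    move: A1 A2 A3 A12 A13 A23; rewrite /adjn; lia.
  + have allq : forall b, exists k, k < n /\ s b = qvec n k.
      move=> b; case: (eqVneq (om 0) b) => [<-|Hb]; first by exists i.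
      have [k [Hk E]] := qnext (ltac:(lia) : 1 < n) (Ds b) Ei Hi (Ks _ _ Hb).
      by exists k.
    have Hn0 : 0 < n by lia.
    pose g b := odflt (Ordinal Hn0) [pick k : 'I_n | s b == qvec n k].
    have Hg : forall b, s b = qvec n (g b).
      move=> b; rewrite /g; case: pickP => [k /eqP E|H] //=.
      have [k [Hk E]] := allq b.
      by move: (H (Ordinal Hk)); rewrite E eqxx.
    have ginj : injective g.
      move=> a b Eab; apply/eqP; apply/negP => /negP Hab.
      have := Ks _ _ Hab; rewrite !Hg Eab => H.
      exact: (q_self (ltn_ord (g b)) H).
    have := @leq_card _ _ g ginj; rewrite !card_ord; lia.
Qed.

Lemma fval_c n j : j < n -> fval (cvec n j) != None.
Proof.
move=> Hj; rewrite /fval; case: ifP => // _.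
by have -> : [exists k : 'I_n, cvec n j == cvec n k] by apply/existsP; exists (Ordinal Hj).
Qed.

Lemma fval_q n i : i < n -> fval (qvec n i) != None.
Proof.
move=> Hi; rewrite /fval; case: ifP => // _.
have -> : [exists k : 'I_n, qvec n i == qvec n k] by apply/existsP; exists (Ordinal Hi).
by rewrite orbT.
Qed.

Theorem mainTheorem16 (n : nat) (M : nat -> Prop) :
  Nhat n ->
  (forall m, M m -> Nhat m /\ m <> n) ->
  ~ (forall f : pfun, (forall m, M m -> pPol (@R02 m) f) -> pPol (@R02 n) f).
Proof.
move=> [Hno Hn3] HM H.
have Ho : n %% 2 = 1 by rewrite modn2 Hno.
have Hf := H (fn n).
have pfE : forall x, pfval (fn n) x = fval x by move=> x; rewrite /= ffunE.
have P1 : forall m, M m -> pPol (@R02 m) (fn n).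
  move=> m /HM [[Hmo Hm3] Hmn] Mx Hdom Hcol.
  have Hmo' : m %% 2 = 1 by rewrite modn2 Hmo.
  pose r a := [ffun t => Mx (lshift m a) t] : btuple (4 * n).
  pose s a := [ffun t => Mx (rshift m a) t] : btuple (4 * n).
  have Dr : forall a, fval (r a) != None.
    by move=> a; have := Hdom (lshift m a); rewrite /in_dom pfE.
  have Ds : forall a, fval (s a) != None.
    by move=> a; have := Hdom (rshift m a); rewrite /in_dom pfE.
  have Cr : forall a b : 'I_m, val b = (val a).+1 %% m -> disj (r a) (r b).
    move=> a b Hb t; have /andP [HC _] := Hcol t.
    move/forallP: HC => /(_ a) /forallP /(_ b) /implyP.
    by rewrite Hb eqxx => /(_ isT); rewrite !ffunE.
  have Ks : forall a b : 'I_m, a != b -> disj (s a) (s b).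
    move=> a b Hab t; have /andP [_ HK] := Hcol t.
    move/forallP: HK => /(_ a) /forallP /(_ b) /implyP /(_ Hab).
    by rewrite !ffunE.
  have [PC PK] := @pres n m r s Ho Hn3 Hmo' Hm3 Hmn Dr Ds Cr Ks.
  apply/andP; split; apply/forallP => a; apply/forallP => b; apply/implyP => Hb;
    rewrite !ffunE /rho02.
  - exact: PC a b (eqP Hb).
  - exact: PK a b Hb.
have P2 : ~ pPol (@R02 n) (fn n).
  pose Mx (i : 'I_(n + n)) (t : 'I_(4 * n)) :=
    if val i < n then cvec n (val i) t else qvec n (val i - n) t.
  have rowc : forall a : 'I_n, [ffun j => Mx (lshift n a) j] = cvec n a.
    by move=> a; apply/ffunP => t; rewrite ffunE /Mx /= ltn_ord.
  have rowq : forall a : 'I_n, [ffun j => Mx (rshift n a) j] = qvec n a.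
    move=> a; apply/ffunP => t; rewrite ffunE /Mx /=.
    have -> : (n + a < n) = false by lia.
    by rewrite addKn.
  move=> HP.
  have Hn1 : 1 < n by lia.
  have Hn0 : 0 < n by lia.
  have D : forall i, in_dom (fn n) [ffun j => Mx i j].
    move=> i; rewrite /in_dom pfE; case: (splitP i) => k Hk.
    + have -> : i = lshift n k by apply: val_inj.
      by rewrite rowc fval_c.
    + have -> : i = rshift n k by apply: val_inj.
      by rewrite rowq fval_q.
  have Cc : forall t, R02 [ffun i => Mx i t].
    move=> t; apply/andP; split; apply/forallP => a; apply/forallP => b;
      apply/implyP => Hb; rewrite !ffunE /Mx /=.
    - rewrite !ltn_ord; exact: (cc_next_disj Ho Hn3 (ltn_ord a) (eqP Hb) t).
    - have -> : (n + a < n) = false by lia.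
      have -> : (n + b < n) = false by lia.
      rewrite !addKn !ffunE /rho02; apply/negP => /andP [/andP [_ /eqP Ha] /andP [_ /eqP Hb']].
      by move: Hb; rewrite -(inj_eq val_inj) /= -Ha -Hb' eqxx.
  have := HP Mx D Cc; move/andP => [HC _].
  move/forallP: HC => /(_ (Ordinal Hn0)) /forallP /(_ (Ordinal Hn1)) /implyP.
  rewrite /= (@modn_small 1 n) // => /(_ isT).
  rewrite !ffunE.
  have -> : [ffun j => Mx (lshift n (Ordinal Hn0)) j] = cvec n 0 by rewrite rowc.
  have -> : [ffun j => Mx (lshift n (Ordinal Hn1)) j] = cvec n 1 by rewrite rowc.
  by rewrite /fval !eqxx /= orbT.
by apply: P2; apply: Hf.
Qed.
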